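(* Let $\mathcal{B},\mathcal{B}'$ be differential bigraded algebras over $\mathcal{I}$, let $\widehat{A},\widehat{A}'$ be differential bigraded right $\mathcal{B}$-modules, each free over $\mathbb{Z}$ with a basis of bigrading-homogeneous elements having unique right idempotents, and let $\widehat{DD}$ be a rank-one Type DD bimodule over $\mathcal{B}$ and $\mathcal{B}'$ with $\delta_{DD}(1)=\sum_sa_s\otimes c_s^{op}$. Let $F:\widehat{A}\to\widehat{A}'$ be an $\mathcal{A}_\infty$-morphism with $F_n=0$ for $n>2$. Define $F\boxtimes\mathrm{id}_{DD}:\widehat{A}\to\mathcal{B}'\otimes_{\mathcal{I}}\widehat{A}'$ by \[ (F\boxtimes\mathrm{id}_{DD})(x)=1\otimes F_1(x)+\sum_s(-1)^{\deg_h(c_s)\,(1+\deg_h F_2(x\otimes a_s))}\,c_s\otimes F_2(x\otimes a_s). \] Then $F\boxtimes\mathrm{id}_{DD}$ is a morphism of Type D structures from $\widehat{A}\boxtimes\widehat{DD}$ to $\widehat{A}'\boxtimes\widehat{DD}$.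
   Context: $\mathcal{I}=\mathbb{Z}e_1\times\cdots\times\mathbb{Z}e_k$. Differential bigraded algebras over $\mathcal{I}$: unital associative, bigraded (intrinsic, homological $=\deg_h$), degree-$(0,0)$ part $\mathcal{I}$, differential $\mu_1$ of bidegree $(0,1)$, $\mu_1^2=0$, $\mu_1(xy)=(-1)^{\deg_hy}\mu_1(x)y+x\mu_1(y)$; multiplication $\mu_2$. Right dg module: differential $m_1$ of bidegree $(0,1)$, $m_1^2=0$, $m_1(xb)=(-1)^{\deg_hb}m_1(x)b+x\mu_1(b)$; action $m_2$ (primes for $\widehat{A}'$). $|\mathrm{id}|$ multiplies by $(-1)^{\deg_h}$. Rank-one Type DD bimodule: $\widehat{DD}=\mathcal{I}$ with $\mathcal{I}$-bilinear $\delta_{DD}:\mathcal{I}\to\mathcal{B}\otimes_{\mathcal{I}}(\mathcal{B}')^{op}$ of bidegree $(0,1)$ satisfying, for $\delta_{DD}(1)=\sum_sa_s\otimes c_s^{op}$: $\sum_s(-1)^{\deg_hc_s}\mu_1(a_s)\otimes c_s^{op}+\sum_sa_s\otimes\mu_1(c_s)^{op}+\sum_{s,t}(-1)^{\deg_h(a_t)\deg_h(c_s)}a_sa_t\otimes c_t^{op}c_s^{op}=0$. The Type D structure $\widehat{A}\boxtimes\widehat{DD}$ over $\mathcal{B}'$ is $\widehat{A}$ (as left $\mathcal{I}$-module via its right action) with $\delta(x)=1\otimes m_1(x)+\sum_s(-1)^{\deg_h(xa_s)\deg_h(c_s)}c_s\otimes xa_s$; similarly for $\widehat{A}'$ with $\delta'$.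 An $\mathcal{A}_\infty$-morphism $F$ with $F_n=0$ for $n>2$ consists of a bigrading-preserving $\mathcal{I}$-linear $F_1:\widehat{A}\to\widehat{A}'$ and an $\mathcal{I}$-linear $F_2:\widehat{A}\otimes_{\mathcal{I}}\mathcal{B}\to\widehat{A}'$ preserving intrinsic degree and lowering homological degree by $1$, with $m_1'F_1=F_1m_1$; $m_1'F_2+m_2'(F_1\otimes\mathrm{id})=F_1m_2-F_2(m_1\otimes|\mathrm{id}|)-F_2(\mathrm{id}\otimes\mu_1)$; $-m_2'(F_2\otimes|\mathrm{id}|)=F_2(m_2\otimes\mathrm{id})-F_2(\mathrm{id}\otimes\mu_2)$. A morphism of Type D structures $(D,\delta)\to(D',\delta')$ over $\mathcal{B}'$ is a bigrading-preserving $\mathcal{I}$-linear $\Phi:D\to\mathcal{B}'\otimes_{\mathcal{I}}D'$ with $(\mu_1\otimes|\mathrm{id}|)\Phi=(\mu_2\otimes\mathrm{id})(\mathrm{id}\otimes\Phi)\delta-(\mu_2\otimes\mathrm{id})(\mathrm{id}\otimes\delta')\Phi$. *)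

(* Defs.v *)
From HB Require Import structures.
From mathcomp Require Import all_boot all_order all_algebra.
From Stdlib Require List.
Set Implicit Arguments. Unset Strict Implicit. Unset Printing Implicit Defensive.
Import Order.TTheory GRing.Theory Num.Theory.
Local Open Scope ring_scope.

(* Conventions: the ring of idempotents I = Z e_1 x ... x Z e_k is indexed by
   'I_k.  The intrinsic grading takes values in an abelian group Gi, the
   homological grading in int.  A bigraded abelian group is a zmodType M with
   predicates [hom g h x] ("x is homogeneous of bidegree (g,h)") making M the
   direct sum of the subgroups [hom g h]. *)

Section Defs.
Variables (k : nat) (Gi : zmodType).

Definition zsign (n : int) : int := (-1) ^+ `|n|%N.

Definition is_graded (M : zmodType) (hom : Gi -> int -> M -> Prop) : Prop :=
  (forall g h, hom g h 0) /\
  (forall g h x y, hom g h x -> hom g h y -> hom g h (x - y)) /\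
  (forall x : M, exists s : seq ((Gi * int) * M),
       (forall p, p \in s -> hom p.1.1 p.1.2 p.2) /\ x = \sum_(p <- s) p.2) /\
  (forall s : seq ((Gi * int) * M), uniq (map fst s) ->
       (forall p, p \in s -> hom p.1.1 p.1.2 p.2) ->
       \sum_(p <- s) p.2 = 0 -> forall p, p \in s -> p.2 = 0).

Definition is_dg_algebra (B : pzRingType) (e : 'I_k -> B)
    (hom : Gi -> int -> B -> Prop) (mu1 : B -> B) : Prop :=
  is_graded hom /\
  (forall g h g' h' x y, hom g h x -> hom g' h' y -> hom (g + g') (h + h') (x * y)) /\
  (* the degree (0,0) part is I = Z e_1 x ... x Z e_k *)
  (forall i j, e i * e j = if i == j then e i else 0) /\
  (\sum_i e i = 1) /\
  (forall x, hom 0 0 x <-> exists n : 'I_k -> int, x = \sum_i e i *~ n i) /\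
  (forall n : 'I_k -> int, \sum_i e i *~ n i = 0 -> forall i, n i = 0) /\
  (forall x y, mu1 (x - y) = mu1 x - mu1 y) /\
  (forall g h x, hom g h x -> hom g (h + 1) (mu1 x)) /\
  (forall x, mu1 (mu1 x) = 0) /\
  (forall g h x y, hom g h y -> mu1 (x * y) = mu1 x * y *~ zsign h + x * mu1 y).

Unset Implicit Arguments.
Record dgAlgebra := DGAlgebra {
  dga_car :> pzRingType;
  dga_e : 'I_k -> dga_car;
  dga_hom : Gi -> int -> dga_car -> Prop;
  dga_mu1 : dga_car -> dga_car;
  dga_ax : is_dg_algebra dga_e dga_hom dga_mu1 }.
Set Implicit Arguments.

Definition is_dg_module (B : dgAlgebra) (A : zmodType) (m2 : A -> B -> A)
    (hom : Gi -> int -> A -> Prop) (m1 : A -> A) : Prop :=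
  is_graded hom /\
  (forall x y b, m2 (x - y) b = m2 x b - m2 y b) /\
  (forall x a b, m2 x (a - b) = m2 x a - m2 x b) /\
  (forall x, m2 x 1 = x) /\
  (forall x a b, m2 (m2 x a) b = m2 x (a * b)) /\
  (forall g h g' h' x b, hom g h x -> dga_hom B g' h' b ->
       hom (g + g') (h + h') (m2 x b)) /\
  (forall x y, m1 (x - y) = m1 x - m1 y) /\
  (forall g h x, hom g h x -> hom g (h + 1) (m1 x)) /\
  (forall x, m1 (m1 x) = 0) /\
  (forall g h x b, dga_hom B g h b ->
       m1 (m2 x b) = m2 (m1 x) b *~ zsign h + m2 x (dga_mu1 B b)).

Definition free_homog_basis (B : dgAlgebra) (A : zmodType) (m2 : A -> B -> A)
    (hom : Gi -> int -> A -> Prop) : Prop :=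
  exists (J : eqType) (v : J -> A),
    (forall j, exists g h, hom g h (v j)) /\
    (forall j, exists! i, m2 (v j) (dga_e B i) = v j) /\
    (forall x, exists s : seq (J * int), x = \sum_(p <- s) v p.1 *~ p.2) /\
    (forall (s : seq J) (c : J -> int), uniq s ->
       \sum_(j <- s) v j *~ c j = 0 -> forall j, j \in s -> c j = 0).

Unset Implicit Arguments.
Record dgModule (B : dgAlgebra) := DGModule {
  dgm_car :> zmodType;
  dgm_act : dgm_car -> B -> dgm_car;
  dgm_hom : Gi -> int -> dgm_car -> Prop;
  dgm_m1 : dgm_car -> dgm_car;
  dgm_ax : is_dg_module dgm_act dgm_hom dgm_m1;
  dgm_free : free_homog_basis dgm_act dgm_hom }.
Arguments dgm_act {B} d _ _.
Arguments dgm_hom {B} d _ _ _.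
Arguments dgm_m1 {B} d _.
Set Implicit Arguments.

(* M is a right I-module (actM i x = x.e_i), N a left
   I-module (actN i y = e_i.y).  A formal sum s of pure tensors is zero in
   M (x)_I N iff it is killed by every I-balanced biadditive map. *)
Definition tensor_zero (M N : zmodType) (actM : 'I_k -> M -> M)
    (actN : 'I_k -> N -> N) (s : seq (M * N)) : Prop :=
  forall (G : zmodType) (phi : M -> N -> G),
    (forall x y z, phi (x - y) z = phi x z - phi y z) ->
    (forall x y z, phi x (y - z) = phi x y - phi x z) ->
    (forall i x y, phi (actM i x) y = phi x (actN i y)) ->
    \sum_(p <- s) phi p.1 p.2 = 0.

Definition tensor_eq (M N : zmodType) (actM : 'I_k -> M -> M)
    (actN : 'I_k -> N -> N) (s t : seq (M * N)) : Prop :=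
  tensor_zero actM actN (s ++ [seq (- p.1, p.2) | p <- t]).

Definition tensor_homog (M N : zmodType) (actM : 'I_k -> M -> M)
    (actN : 'I_k -> N -> N) (homM : Gi -> int -> M -> Prop)
    (homN : Gi -> int -> N -> Prop) (g : Gi) (h : int) (t : seq (M * N)) : Prop :=
  exists s : seq ((M * N) * ((Gi * int) * (Gi * int))),
    (forall p, List.In p s ->
        [/\ homM p.2.1.1 p.2.1.2 p.1.1, homN p.2.2.1 p.2.2.2 p.1.2,
            p.2.1.1 + p.2.2.1 = g & p.2.1.2 + p.2.2.2 = h]) /\
    tensor_eq actM actN t (map fst s).

(* A term a_s (x) c_s^op of delta_DD(1), with bidegrees of a_s and c_s. *)
Record ddterm (B B' : dgAlgebra) := DDTerm {
  dd_a : B; dd_c : B';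
  dd_ga : Gi; dd_ha : int; dd_gc : Gi; dd_hc : int }.

Section TypeDD.
Variables (B B' : dgAlgebra).

(* B (x)_I (B')^op : right I-action on B, left I-action on (B')^op is
   e.c^op = (c e)^op. *)
Definition actR (C : dgAlgebra) (i : 'I_k) (a : C) : C := a * dga_e C i.

Definition is_DD (dd : seq (ddterm B B')) : Prop :=
  (forall t, List.In t dd ->
     [/\ dga_hom B (dd_ga t) (dd_ha t) (dd_a t),
         dga_hom B' (dd_gc t) (dd_hc t) (dd_c t),
         dd_ga t + dd_gc t = 0 & dd_ha t + dd_hc t = 1]) /\
  (* I-bilinearity of delta_DD : e_i . delta(1) = delta(1) . e_i *)
  (forall i, tensor_eq (@actR B) (@actR B')
       [seq (dga_e B i * dd_a t, dd_c t) | t <- dd]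
       [seq (dd_a t, dga_e B' i * dd_c t) | t <- dd]) /\
  (* the structure equation; note c_t^op c_s^op = (c_s c_t)^op *)
  tensor_zero (@actR B) (@actR B')
    ([seq (dga_mu1 B (dd_a t) *~ zsign (dd_hc t), dd_c t) | t <- dd] ++
     [seq (dd_a t, dga_mu1 B' (dd_c t)) | t <- dd] ++
     [seq (dd_a s * dd_a t *~ zsign (dd_ha t * dd_hc s), dd_c s * dd_c t)
        | s <- dd, t <- dd]).

(* Type D structure A [box] DD over B', evaluated at x homogeneous of
   homological degree h; each term carries the homological degree of its
   A-component. *)
Definition deltaD (dd : seq (ddterm B B')) (A : dgModule B) (h : int) (x : A)
    : seq ((B' * A) * int) :=
  ((1, dgm_m1 A x), h + 1) ::
  [seq ((dd_c t *~ zsign ((h + dd_ha t) * dd_hc t), dgm_act A x (dd_a t)),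
        h + dd_ha t) | t <- dd].

End TypeDD.

Definition is_Ainf_morphism (B : dgAlgebra) (A A' : dgModule B)
    (F1 : A -> A') (F2 : A -> B -> A') : Prop :=
  (forall x y, F1 (x - y) = F1 x - F1 y) /\
  (forall g h x, dgm_hom A g h x -> dgm_hom A' g h (F1 x)) /\
  (forall i x, F1 (dgm_act A x (dga_e B i)) = dgm_act A' (F1 x) (dga_e B i)) /\
  (forall x y b, F2 (x - y) b = F2 x b - F2 y b) /\
  (forall x a b, F2 x (a - b) = F2 x a - F2 x b) /\
  (forall i x b, F2 (dgm_act A x (dga_e B i)) b = F2 x (dga_e B i * b)) /\
  (forall i x b, F2 x (b * dga_e B i) = dgm_act A' (F2 x b) (dga_e B i)) /\
  (forall g h g' h' x b, dgm_hom A g h x -> dga_hom B g' h' b ->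
      dgm_hom A' (g + g') (h + h' - 1) (F2 x b)) /\
  (forall x, dgm_m1 A' (F1 x) = F1 (dgm_m1 A x)) /\
  (forall g h x b, dga_hom B g h b ->
      dgm_m1 A' (F2 x b) + dgm_act A' (F1 x) b =
      F1 (dgm_act A x b) - F2 (dgm_m1 A x) (b *~ zsign h) - F2 x (dga_mu1 B b)) /\
  (forall g h x a b, dga_hom B g h b ->
      - dgm_act A' (F2 x a) (b *~ zsign h) = F2 (dgm_act A x a) b - F2 x (a * b)).

(* F [box] id_DD, evaluated at x homogeneous of homological degree h; each
   term carries the homological degree of its A'-component. *)
Definition boxPhi (B B' : dgAlgebra) (A A' : dgModule B)
    (F1 : A -> A') (F2 : A -> B -> A') (dd : seq (ddterm B B')) (h : int) (x : A)
    : seq ((B' * A') * int) :=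
  ((1, F1 x), h) ::
  [seq ((dd_c t *~ zsign (dd_hc t * (1 + (h + dd_ha t - 1))), F2 x (dd_a t)),
        h + dd_ha t - 1) | t <- dd].

(* Phi, delta, delta' are given on homogeneous elements (of the indicated
   homological degree) as formal sums of pure tensors in B' (x)_I D', resp.
   B' (x)_I D, each term tagged with the homological degree of its second
   factor.  D, D' are left I-modules via their right I-actions. *)
Definition typeD_morphism (B B' : dgAlgebra) (D D' : dgModule B)
    (Phi : int -> D -> seq ((B' * D') * int))
    (delta : int -> D -> seq ((B' * D) * int))
    (delta' : int -> D' -> seq ((B' * D') * int)) : Prop :=
  let actD' i (y : D') := dgm_act D' y (dga_e B i) in
  let teq := tensor_eq (@actR B') actD' in
  let forget (s : seq ((B' * D') * int)) := map fst s in
  forall g h (x : D), dgm_hom D g h x ->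
    (forall y, dgm_hom D g h y ->
        teq (forget (Phi h (x + y))) (forget (Phi h x) ++ forget (Phi h y))) /\
    (forall i, teq (forget (Phi h (dgm_act D x (dga_e B i))))
                   [seq (dga_e B' i * p.1.1, p.1.2) | p <- Phi h x]) /\
    tensor_homog (@actR B') actD' (dga_hom B') (dgm_hom D') g h
       (forget (Phi h x)) /\
    (* (mu1 (x) |id|) Phi = (mu2 (x) id)(id (x) Phi) delta
                            - (mu2 (x) id)(id (x) delta') Phi *)
    teq [seq (dga_mu1 B' p.1.1, p.1.2 *~ zsign p.2) | p <- Phi h x]
        (flatten [seq [seq (p.1.1 * q.1.1, q.1.2) | q <- Phi p.2 p.1.2]
                    | p <- delta h x] ++
         [seq (- r.1, r.2) | r <- flatten
            [seq [seq (p.1.1 * q.1.1, q.1.2) | q <- delta' p.2 p.1.2]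
               | p <- Phi h x]]).

End Defs.
Arguments dgModule {k Gi} B.
Arguments ddterm {k Gi} B B'.
Arguments deltaD {k Gi B B'} dd A h x.

(* Main.v *)
Require Import Defs.
From mathcomp Require Import all_boot all_order all_algebra zify.
From Stdlib Require Import IndefiniteDescription.
From Stdlib Require List.
Set Implicit Arguments. Unset Strict Implicit. Unset Printing Implicit Defensive.
Import Order.TTheory GRing.Theory Num.Theory.
Local Open Scope ring_scope.

Section Add.
Variables (M N : zmodType) (f : M -> N).
Hypothesis fB : forall x y, f (x - y) = f x - f y.
Lemma af0 : f 0 = 0. Proof. by rewrite -(subrr 0) fB subrr. Qed.
Lemma afN x : f (- x) = - f x. Proof. by rewrite -sub0r fB af0 sub0r. Qed.
Lemma afD x y : f (x + y) = f x + f y.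
Proof. by rewrite -{1}[y]opprK fB afN opprK. Qed.
Lemma afMn x n : f (x *+ n) = f x *+ n.
Proof. elim: n => [|n IH]; first by rewrite !mulr0n af0. by rewrite !mulrS afD IH. Qed.
Lemma afMz x n : f (x *~ n) = f x *~ n.
Proof. case: n => n; first by rewrite -!pmulrn afMn. by rewrite !NegzE !mulrNz afN -!pmulrn afMn. Qed.
Lemma af_sum (I : Type) (r : seq I) (F : I -> M) : f (\sum_(i <- r) F i) = \sum_(i <- r) f (F i).
Proof. elim: r => [|a r IH]; rewrite ?big_nil ?af0 // !big_cons afD IH //. Qed.
End Add.

Lemma sum_in (G : zmodType) (I : Type) (r : seq I) (F1 F2 : I -> G) :
  (forall t, List.In t r -> F1 t = F2 t) -> \sum_(t <- r) F1 t = \sum_(t <- r) F2 t.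
Proof.
elim: r => [|a r IH] H; rewrite ?big_nil // !big_cons H /=; last by left.
by rewrite IH // => t Ht; apply: H; right.
Qed.

Lemma partition_sum (G : zmodType) (K : eqType) (X : eqType) (s : seq (K * X)) (F : K * X -> G) :
  \sum_(p <- s) F p = \sum_(d <- undup (map fst s)) \sum_(p <- s | p.1 == d) F p.
Proof.
symmetry; under eq_bigr do rewrite big_mkcond /=.
rewrite exchange_big /=.
rewrite [LHS]big_seq [RHS]big_seq; apply: eq_bigr => p ps.
rewrite -big_mkcond /= -big_filter.
have -> : [seq i <- undup [seq i.1 | i <- s] | p.1 == i] = [:: p.1].
  rewrite (eq_filter (a2 := pred1 p.1)); last by move=> d /=; rewrite eq_sym.
  apply: filter_pred1_uniq; first exact: undup_uniq.
  by rewrite mem_undup; apply: map_f.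
by rewrite big_seq1.
Qed.
Set Implicit Arguments. Unset Strict Implicit. Unset Printing Implicit Defensive.
Import Order.TTheory GRing.Theory Num.Theory.
Local Open Scope ring_scope.

Section Graded.
Variables (Gi : zmodType) (M : zmodType) (hom : Gi -> int -> M -> Prop).
Hypothesis H : is_graded hom.

Lemma hom0 g h : hom g h 0. Proof. by case: H. Qed.
Lemma homB g h x y : hom g h x -> hom g h y -> hom g h (x - y).
Proof. by case: H => _ [+ _]; apply. Qed.
Lemma homN g h x : hom g h x -> hom g h (- x).
Proof. by move=> hx; rewrite -sub0r; apply: homB => //; apply: hom0. Qed.
Lemma homD g h x y : hom g h x -> hom g h y -> hom g h (x + y).
Proof. by move=> hx hy; rewrite -[y]opprK; apply: homB => //; apply: homN. Qed.
Lemma hom_sum (I : Type) (r : seq I) (P : pred I) (F : I -> M) g h :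
  (forall i, P i -> hom g h (F i)) -> hom g h (\sum_(i <- r | P i) F i).
Proof. move=> HF; apply: big_ind => //; [exact: hom0 | exact: homD]. Qed.
Lemma homMn g h x n : hom g h x -> hom g h (x *+ n).
Proof. move=> hx; elim: n => [|n IH]; rewrite ?mulr0n ?mulrS; [exact: hom0|exact: homD]. Qed.
Lemma homMz g h x n : hom g h x -> hom g h (x *~ n).
Proof.
move=> hx; case: n => n; first by rewrite -pmulrn; apply: homMn.
by rewrite NegzE mulrNz -pmulrn; apply/homN/homMn.
Qed.

Lemma graded_unique (w : Gi * int -> int) (s : seq ((Gi * int) * M)) :
  (forall p, p \in s -> hom p.1.1 p.1.2 p.2) -> \sum_(p <- s) p.2 = 0 ->
  \sum_(p <- s) p.2 *~ w p.1 = 0.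
Proof.
move=> hs s0.
pose s' := [seq (d, \sum_(p <- s | p.1 == d) p.2) | d <- undup (map fst s)].
have ms' : map fst s' = undup (map fst s) by rewrite /s' -map_comp map_id.
have hs' : forall p, p \in s' -> hom p.1.1 p.1.2 p.2.
  move=> p /mapP [d _ ->] /=; rewrite big_seq_cond; apply: hom_sum => q /andP [qs /eqP <-].
  exact: hs.
have ss' : \sum_(p <- s') p.2 = 0 by rewrite big_map /= -partition_sum.
have z := proj2 (proj2 (proj2 H)) s'; rewrite ms' in z.
have {z} z := z (undup_uniq _) hs' ss'.
rewrite (partition_sum s (fun p => p.2 *~ w p.1)) big_seq big1 // => d dIn.
rewrite (eq_bigr (fun p => p.2 *~ w d)); last by move=> p /eqP ->.
rewrite -mulrz_suml.
have -> : \sum_(i <- s | i.1 == d) i.2 = 0 by apply: (z (d, _)); apply: map_f.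
by rewrite mul0rz.
Qed.

Definition dec (x : M) : seq ((Gi * int) * M) :=
  proj1_sig (constructive_indefinite_description _ (proj1 (proj2 (proj2 H)) x)).
Lemma decP x : (forall p, p \in dec x -> hom p.1.1 p.1.2 p.2) /\ x = \sum_(p <- dec x) p.2.
Proof. by rewrite /dec; case: constructive_indefinite_description. Qed.

Definition gpar (n : int) (x : M) := \sum_(p <- dec x) p.2 *~ zsign (n * p.1.2).

Lemma gpar_dec n s : (forall p, p \in s -> hom p.1.1 p.1.2 p.2) ->
  gpar n (\sum_(p <- s) p.2) = \sum_(p <- s) p.2 *~ zsign (n * p.1.2).
Proof.
move=> hs; apply/eqP; rewrite -subr_eq0; apply/eqP.
have [hd xd] := decP (\sum_(p <- s) p.2).
have := graded_unique (fun q => zsign (n * q.2))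
  (s := dec (\sum_(p <- s) p.2) ++ [seq (p.1, - p.2) | p <- s]).
have E : \sum_(p <- s) (- p.2) *~ zsign (n * p.1.2) = - \sum_(p <- s) p.2 *~ zsign (n * p.1.2).
  by rewrite -sumrN; apply: eq_bigr => p _; rewrite mulNrz.
rewrite !big_cat !big_map /= E -xd /gpar sumrN; apply.
  move=> p; rewrite mem_cat => /orP [/hd //|/mapP [q qs ->] /=]; exact/homN/hs.
by rewrite ?sumrN subrr.
Qed.

Lemma gpar_hom n g h x : hom g h x -> gpar n x = x *~ zsign (n * h).
Proof.
move=> hx; have := gpar_dec n (s := [:: ((g, h), x)]); rewrite !big_seq1; apply.
by move=> p; rewrite inE => /eqP ->.
Qed.

Lemma gparB n x y : gpar n (x - y) = gpar n x - gpar n y.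
Proof.
have [hx ex] := decP x; have [hy ey] := decP y.
have -> : x - y = \sum_(p <- dec x ++ [seq (p.1, - p.2) | p <- dec y]) p.2.
  by rewrite big_cat big_map /= sumrN -ex -ey.
rewrite gpar_dec; last first.
  move=> p; rewrite mem_cat => /orP [/hx //|/mapP [q qs ->] /=]; exact/homN/hy.
rewrite big_cat big_map /= -sumrN; congr (_ + _); apply: eq_bigr => p _; by rewrite mulNrz.
Qed.

Lemma gpar_morph n (f : M -> M) : (forall x y, f (x - y) = f x - f y) ->
  (forall g h x, hom g h x -> hom g h (f x)) -> forall x, gpar n (f x) = f (gpar n x).
Proof.
move=> fB fh x; have [hx ex] := decP x.
have -> : f x = \sum_(p <- [seq (p.1, f p.2) | p <- dec x]) p.2.
  by rewrite big_map /= {1}ex af_sum.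
rewrite gpar_dec; last by move=> p /mapP [q qs ->] /=; apply/fh/hx.
rewrite big_map /= /gpar af_sum //; apply: eq_bigr => p _; by rewrite afMz.
Qed.
End Graded.
Set Implicit Arguments. Unset Strict Implicit. Unset Printing Implicit Defensive.
Import Order.TTheory GRing.Theory Num.Theory.
Local Open Scope ring_scope.

Definition oddz (n : int) : bool := odd `|n|%N.
Lemma zsignE n : zsign n = (-1) ^+ oddz n.
Proof. by rewrite /zsign /oddz signr_odd. Qed.
Lemma zsignS n : zsign (n + 1) = - zsign n.
Proof.
case: n => m.
  have -> : m%:Z + 1 = (m.+1)%:Z by lia.
  by rewrite /zsign /= exprS mulN1r.
have -> : Negz m + 1 = - (m%:Z) by rewrite NegzE; lia.
by rewrite /zsign abszN /= exprS mulN1r opprK.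
Qed.
Lemma zsignP1 n : zsign (n - 1) = - zsign n.
Proof. by rewrite -{2}(subrK 1 n) zsignS opprK. Qed.
Lemma zsign0 : zsign 0 = 1. Proof. by []. Qed.
Lemma zsignD a b : zsign (a + b) = zsign a * zsign b.
Proof.
have P : forall m : nat, zsign (a + m%:Z) = zsign a * zsign m%:Z /\
                       zsign (a - m%:Z) = zsign a * zsign (- m%:Z).
  elim=> [|m [IH1 IH2]]; first by rewrite (_ : Posz 0 = 0) //; split; rewrite ?oppr0 ?addr0 ?subr0 zsign0 mulr1.
  have -> : (m.+1)%:Z = m%:Z + 1 by lia.
  rewrite addrA !zsignS IH1 mulrN; split => //.
  by rewrite opprD addrA !zsignP1 IH2 mulrN.
case: b => m; first exact: (P m).1.
by rewrite NegzE (P m.+1).2.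
Qed.
Lemma oddzD a b : oddz (a + b) = oddz a (+) oddz b.
Proof. by apply: (@signr_inj int); rewrite signr_addb -!zsignE zsignD. Qed.
Lemma oddzM a b : oddz (a * b) = oddz a && oddz b.
Proof. by rewrite /oddz abszM oddM. Qed.
Lemma oddzN a : oddz (- a) = oddz a.
Proof. by rewrite /oddz abszN. Qed.
Lemma oddz1 : oddz 1 = true. Proof. by []. Qed.
Lemma oddz0 : oddz 0 = false. Proof. by []. Qed.
Lemma oddzB a b : oddz (a - b) = oddz a (+) oddz b.
Proof. by rewrite oddzD oddzN. Qed.

Ltac signs := rewrite ?zsignE -?signr_addb ?(oddzD, oddzB, oddzM, oddzN, oddz1, oddz0).

Lemma teq_sum (G M N : zmodType) (phi : M -> N -> G) (s t : seq (M * N)) :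
  (forall x y z, phi (x - y) z = phi x z - phi y z) ->
  \sum_(p <- s ++ [seq (- p.1, p.2) | p <- t]) phi p.1 p.2 =
  \sum_(p <- s) phi p.1 p.2 - \sum_(p <- t) phi p.1 p.2.
Proof.
move=> phB; rewrite big_cat big_map /= -sumrN; congr (_ + _).
by apply: eq_bigr => p _; rewrite (afN (f := fun a => phi a p.2)) // => u v; apply: phB.
Qed.

Lemma teq_intro (k : nat) (M N : zmodType) actM actN (s t : seq (M * N)) :
  (forall (G : zmodType) (phi : M -> N -> G),
    (forall x y z, phi (x - y) z = phi x z - phi y z) ->
    (forall x y z, phi x (y - z) = phi x y - phi x z) ->
    (forall i x y, phi (actM i x) y = phi x (actN i y)) ->
    \sum_(p <- s) phi p.1 p.2 = \sum_(p <- t) phi p.1 p.2) ->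
  @tensor_eq k M N actM actN s t.
Proof.
move=> H G phi h1 h2 h3; rewrite teq_sum //; apply/eqP; rewrite subr_eq0; apply/eqP.
exact: H.
Qed.

Lemma teq_elim (k : nat) (M N : zmodType) actM actN (s t : seq (M * N)) :
  @tensor_eq k M N actM actN s t ->
  (forall (G : zmodType) (phi : M -> N -> G),
    (forall x y z, phi (x - y) z = phi x z - phi y z) ->
    (forall x y z, phi x (y - z) = phi x y - phi x z) ->
    (forall i x y, phi (actM i x) y = phi x (actN i y)) ->
    \sum_(p <- s) phi p.1 p.2 = \sum_(p <- t) phi p.1 p.2).
Proof.
move=> H G phi h1 h2 h3; have := H G phi h1 h2 h3; rewrite teq_sum //.
by move/eqP; rewrite subr_eq0 => /eqP.
Qed.
Set Implicit Arguments. Unset Strict Implicit. Unset Printing Implicit Defensive.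
Import Order.TTheory GRing.Theory Num.Theory.
Local Open Scope ring_scope.

Arguments dgm_hom {k Gi B} d _ _ _.
Arguments dgm_act {k Gi B} d _ _.
Arguments dgm_m1 {k Gi B} d _.
Arguments dga_hom {k Gi} d _ _ _.
Arguments dga_e {k Gi} d _.
Arguments dga_mu1 {k Gi} d _.
Arguments dga_ax {k Gi} d.
Arguments dgm_ax {k Gi B} d.

Section Main.
Variables (k : nat) (Gi : zmodType) (B B' : dgAlgebra k Gi) (A A' : dgModule B)
    (dd : seq (ddterm B B')) (F1 : A -> A') (F2 : A -> B -> A').
Hypothesis HDD : is_DD dd.
Hypothesis HF : is_Ainf_morphism F1 F2.

Lemma F1B x y : F1 (x - y) = F1 x - F1 y. Proof. by case: HF. Qed.
Lemma F1h g h x : dgm_hom A g h x -> dgm_hom A' g h (F1 x).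
Proof. by case: HF => _ [+ _]; apply. Qed.
Lemma F1e i x : F1 (dgm_act A x (dga_e B i)) = dgm_act A' (F1 x) (dga_e B i).
Proof. by case: HF => _ [_ [+ _]]; apply. Qed.
Lemma F2Bl x y b : F2 (x - y) b = F2 x b - F2 y b.
Proof. by case: HF => _ [_ [_ [+ _]]]; apply. Qed.
Lemma F2Br x a b : F2 x (a - b) = F2 x a - F2 x b.
Proof. by case: HF => _ [_ [_ [_ [+ _]]]]; apply. Qed.
Lemma F2el i x b : F2 (dgm_act A x (dga_e B i)) b = F2 x (dga_e B i * b).
Proof. by case: HF => _ [_ [_ [_ [_ [+ _]]]]]; apply. Qed.
Lemma F2er i x b : F2 x (b * dga_e B i) = dgm_act A' (F2 x b) (dga_e B i).
Proof. by case: HF => _ [_ [_ [_ [_ [_ [+ _]]]]]]; apply. Qed.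
Lemma F2h g h g' h' x b : dgm_hom A g h x -> dga_hom B g' h' b ->
      dgm_hom A' (g + g') (h + h' - 1) (F2 x b).
Proof. by case: HF => _ [_ [_ [_ [_ [_ [_ [+ _]]]]]]]; apply. Qed.
Lemma FR1 x : dgm_m1 A' (F1 x) = F1 (dgm_m1 A x).
Proof. by case: HF => _ [_ [_ [_ [_ [_ [_ [_ [+ _]]]]]]]]; apply. Qed.
Lemma FR2 g h x b : dga_hom B g h b ->
      dgm_m1 A' (F2 x b) + dgm_act A' (F1 x) b =
      F1 (dgm_act A x b) - F2 (dgm_m1 A x) (b *~ zsign h) - F2 x (dga_mu1 B b).
Proof. by case: HF => _ [_ [_ [_ [_ [_ [_ [_ [_ [+ _]]]]]]]]]; apply. Qed.
Lemma FR3 g h x a b : dga_hom B g h b ->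
      - dgm_act A' (F2 x a) (b *~ zsign h) = F2 (dgm_act A x a) b - F2 x (a * b).
Proof. by case: HF => _ [_ [_ [_ [_ [_ [_ [_ [_ [_ +]]]]]]]]]; apply. Qed.

Section Alg.
Variable C : dgAlgebra k Gi.
Lemma Cgr : is_graded (dga_hom C). Proof. by case: (dga_ax C). Qed.
Lemma Chom_mul g h g' h' x y : dga_hom C g h x -> dga_hom C g' h' y ->
  dga_hom C (g + g') (h + h') (x * y).
Proof. by case: (dga_ax C) => _ [+ _]; apply. Qed.
Lemma Chom1 : dga_hom C 0 0 1.
Proof.
case: (dga_ax C) => _ [_ [_ [sum1 [H00 _]]]]; apply/H00; exists (fun=> 1).
by under eq_bigr do rewrite mulr1z.
Qed.
Lemma Chom_e i : dga_hom C 0 0 (dga_e C i).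
Proof.
case: (dga_ax C) => _ [_ [_ [sum1 [H00 _]]]]; apply/H00.
exists (fun j => if j == i then 1 else 0).
rewrite (bigD1 i) //= eqxx mulr1z big1 ?addr0 // => j /negbTE ->; by rewrite mulr0z.
Qed.
Lemma CmuB x y : dga_mu1 C (x - y) = dga_mu1 C x - dga_mu1 C y.
Proof. by case: (dga_ax C) => _ [_ [_ [_ [_ [_ [+ _]]]]]]; apply. Qed.
Lemma Cmuh g h x : dga_hom C g h x -> dga_hom C g (h + 1) (dga_mu1 C x).
Proof. by case: (dga_ax C) => _ [_ [_ [_ [_ [_ [_ [+ _]]]]]]]; apply. Qed.
Lemma Cmu1 : dga_mu1 C 1 = 0.
Proof.
case: (dga_ax C) => _ [_ [_ [_ [_ [_ [_ [_ [_ L]]]]]]]].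
have := L 0 0 1 1 Chom1; rewrite !mul1r !mulr1 (_ : zsign 0 = 1) // mulr1z.
by move=> E; apply: (@addrI _ (dga_mu1 C 1)); rewrite addr0 -E.
Qed.
Lemma Cmul_e_hom i g h x : dga_hom C g h x -> dga_hom C g h (x * dga_e C i).
Proof. by move=> hx; have := Chom_mul hx (Chom_e i); rewrite !addr0. Qed.
Lemma Cgpar_e n i x : gpar Cgr n (x * dga_e C i) = gpar Cgr n x * dga_e C i.
Proof.
apply: (@gpar_morph _ _ _ (@Cgr) n (fun x => x * dga_e C i)); first by move=> u v; rewrite mulrBl.
by move=> g h u; apply: Cmul_e_hom.
Qed.
End Alg.

Lemma actBr (M : dgModule B) y a b : dgm_act M y (a - b) = dgm_act M y a - dgm_act M y b.
Proof. by case: (dgm_ax M) => _ [_ [+ _]]; apply. Qed.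

Definition sg (t : ddterm B B') (n : int) := zsign ((n + dd_ha t) * dd_hc t).

Lemma ddP t : List.In t dd ->
  [/\ dga_hom B (dd_ga t) (dd_ha t) (dd_a t), dga_hom B' (dd_gc t) (dd_hc t) (dd_c t),
      dd_ga t + dd_gc t = 0 & dd_ha t + dd_hc t = 1].
Proof. by case: HDD => + _; apply. Qed.

Lemma phisg t n : zsign (dd_hc t * (1 + (n + dd_ha t - 1))) = sg t n.
Proof. by rewrite /sg mulrC addrC subrK. Qed.

Section Signs.
Variable t : ddterm B B'.
Hypothesis ht : dd_ha t + dd_hc t = 1.
Lemma hcE : dd_hc t = 1 - dd_ha t. Proof. lia. Qed.
Lemma sgI1 n : sg t (n + 1) + sg t n * zsign (dd_ha t) = 0.
Proof. rewrite /sg hcE; signs; by case: (oddz n); case: (oddz (dd_ha t)). Qed.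
Lemma sgh n : sg t n = zsign (n * dd_hc t).
Proof. rewrite /sg hcE; signs; by case: (oddz n); case: (oddz (dd_ha t)). Qed.
Lemma sgI2 n : zsign (dd_ha t) * sg t (n + 1) + sg t n = 0.
Proof. rewrite /sg hcE; signs; by case: (oddz n); case: (oddz (dd_ha t)). Qed.
End Signs.

Notation actD' := (fun i (y : A') => dgm_act A' y (dga_e B i)).

Lemma part1 h x y : tensor_eq (@actR _ _ B') actD'
  (map fst (boxPhi F1 F2 dd h (x + y)))
  (map fst (boxPhi F1 F2 dd h x) ++ map fst (boxPhi F1 F2 dd h y)).
Proof.
apply: teq_intro => G phi ph1 ph2 ph3.
rewrite /boxPhi /= !big_cons big_cat big_cons !big_map /=.
rewrite (afD F1B) (afD (ph2 1)).
under eq_bigr do rewrite (afD (fun u v => F2Bl u v _)) (afD (ph2 _)).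
by rewrite big_split /= addrACA [RHS]addrA.
Qed.

Lemma HDDeq : tensor_zero (@actR _ _ B) (@actR _ _ B')
    ([seq (dga_mu1 B (dd_a t) *~ zsign (dd_hc t), dd_c t) | t <- dd] ++
     [seq (dd_a t, dga_mu1 B' (dd_c t)) | t <- dd] ++
     [seq (dd_a s * dd_a t *~ zsign (dd_ha t * dd_hc s), dd_c s * dd_c t)
        | s <- dd, t <- dd]).
Proof. by case: HDD => _ [_ +]. Qed.

Lemma Hbil i : tensor_eq (@actR _ _ B) (@actR _ _ B')
       [seq (dga_e B i * dd_a t, dd_c t) | t <- dd]
       [seq (dd_a t, dga_e B' i * dd_c t) | t <- dd].
Proof. by case: HDD => _ [+ _]; apply. Qed.

Lemma part2 h x i : tensor_eq (@actR _ _ B') actD'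
  (map fst (boxPhi F1 F2 dd h (dgm_act A x (dga_e B i))))
  [seq (dga_e B' i * p.1.1, p.1.2) | p <- boxPhi F1 F2 dd h x].
Proof.
apply: teq_intro => G phi ph1 ph2 ph3.
rewrite /boxPhi /= !big_cons !big_map /=.
congr (_ + _); first by rewrite F1e -ph3 /actR mul1r mulr1.
under eq_bigr do rewrite F2el.
have := teq_elim (Hbil i) (phi := fun a c => phi (gpar (@Cgr B') h c) (F2 x a)).
rewrite !big_map /= => E.
transitivity (\sum_(t <- dd) phi (gpar (@Cgr B') h (dd_c t)) (F2 x (dga_e B i * dd_a t))).
  apply: sum_in => t Ht /=; have [ha hc _ hs] := ddP Ht.
  by rewrite (gpar_hom _ _ hc) phisg sgh.
rewrite E.
- apply: sum_in => t Ht; have [ha hc _ hs] := ddP Ht.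
  rewrite (gpar_hom _ _ (Chom_mul (Chom_e B' i) hc)) add0r phisg sgh //.
  by rewrite mulrzAr.
- move=> u v w; by rewrite F2Br ph2.
- move=> u v w; by rewrite gparB ph1.
- move=> j u v; by rewrite /actR F2er -ph3 /actR Cgpar_e.
Qed.

Lemma part3 g h x : dgm_hom A g h x ->
  tensor_homog (@actR _ _ B') actD' (dga_hom B') (dgm_hom A') g h
    (map fst (boxPhi F1 F2 dd h x)).
Proof.
move=> hx.
exists (((1, F1 x), ((0,0),(g,h))) :: [seq ((dd_c t *~ zsign (dd_hc t * (1 + (h + dd_ha t - 1))),
   F2 x (dd_a t)), ((dd_gc t, dd_hc t), (g + dd_ga t, h + dd_ha t - 1))) | t <- dd]).
split.
- move=> p /= [<- | /List.in_map_iff [t [<- Ht]]] /=.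
  + split; [exact: Chom1 | exact: F1h | exact: add0r | exact: add0r].
  + have [ha hc hg hs] := ddP Ht; split.
    * exact: (homMz (Cgr B') _ hc).
    * exact: F2h.
    * by rewrite addrCA [dd_gc t + _]addrC hg addr0.
    * lia.
- apply: teq_intro => G phi _ _ _.
  by rewrite /boxPhi /= !big_cons !big_map.
Qed.


Lemma lin (G : zmodType) (a1 a2 a3 a4 w y : G) (s s1 z : int) : s1 + s * z = 0 ->
  a4 *~ s1 + ((a1 + a2 + a3 + a4 *~ z) *~ s + w) - (a2 *~ s + (a1 *~ s + y)) =
  a3 *~ s + (w - y).
Proof.
move=> Hs; rewrite !mulrzDl -mulrzA (mulrC z).
set b1 := a1 *~ s; set b2 := a2 *~ s; set b3 := a3 *~ s.
rewrite [b1 + b2 + b3 + _ + w]addrAC addrCA -mulrzDr Hs mulr0z addr0.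
have -> : b1 + b2 + b3 + w = (b3 + w) + (b1 + b2) by rewrite -addrA addrC.
have -> : b2 + (b1 + y) = (b1 + b2) + y by rewrite addrA (addrC b2).
by rewrite addrKA addrA.
Qed.

Lemma lin2 (G : zmodType) (b c : G) (S S' z : int) : z * S + S' = 0 ->
  (c - b *~ z) *~ S - b *~ S' = c *~ S.
Proof. by move=> H; rewrite mulrzBl -mulrzA -addrA -opprD -mulrzDr H mulr0z subr0. Qed.

Lemma comb (G : zmodType) (I : Type) (r : seq I) (L0 c c' : G) (L P R1 V R2 Z : I -> G) :
  L0 = 0 -> c = c' -> (forall t, List.In t r -> P t + R1 t - (V t + R2 t) = Z t) ->
  \sum_(t <- r) L t = \sum_(t <- r) Z t ->
  L0 + \sum_(t <- r) L t =
  c + \sum_(t <- r) P t + \sum_(t <- r) R1 t - (c' + \sum_(t <- r) V t + \sum_(t <- r) R2 t).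
Proof.
move=> -> <- HZ ->; rewrite add0r -(sum_in HZ) sumrB !big_split /=.
by rewrite -[c + _ + _]addrA -[c + _ + \sum_(t <- r) R2 t]addrA [c + (_ + _)]addrC addrKA.
Qed.

Lemma part4 g h x : dgm_hom A g h x ->
 tensor_eq (@actR _ _ B') actD'
   [seq (dga_mu1 B' p.1.1, p.1.2 *~ zsign p.2) | p <- boxPhi F1 F2 dd h x]
   (flatten [seq [seq (p.1.1 * q.1.1, q.1.2) | q <- boxPhi F1 F2 dd p.2 p.1.2]
               | p <- deltaD dd A h x] ++
    [seq (- r.1, r.2) | r <- flatten
       [seq [seq (p.1.1 * q.1.1, q.1.2) | q <- deltaD dd A' p.2 p.1.2]
          | p <- boxPhi F1 F2 dd h x]]).
Proof.
move=> hx; apply: teq_intro => G phi ph1 ph2 ph3.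
have phMzl : forall a n y, phi (a *~ n) y = phi a y *~ n.
  by move=> a n y; apply: (afMz (f := fun a => phi a y)) => u v; apply: ph1.
have phMzr : forall a y n, phi a (y *~ n) = phi a y *~ n.
  by move=> a y n; apply: afMz.
have ph0l : forall y, phi 0 y = 0.
  by move=> y; apply: (af0 (f := fun a => phi a y)) => u v; apply: ph1.
rewrite teq_sum //.
rewrite big_map !big_allpairs_dep /=.
rewrite /boxPhi /deltaD !big_cons !big_map /=.
apply: (comb (Z := fun t => phi (dd_c t) (F2 x (dga_mu1 B (dd_a t))) *~ sg t h +
   \sum_(u <- dd) phi (dd_c t * dd_c u) (F2 x (dd_a t * dd_a u)) *~ (sg t h * sg u (h + dd_ha t)))).
- by rewrite Cmu1 ph0l.
- by rewrite FR1.
- move=> t Ht; have [ha hc hg hs] := ddP Ht.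
  rewrite !big_cons !big_map /= !mul1r !mulr1 !phisg !phMzl -/(sg t h).
  have E' : F1 (dgm_act A x (dd_a t)) = dgm_m1 A' (F2 x (dd_a t)) + dgm_act A' (F1 x) (dd_a t)
     + F2 x (dga_mu1 B (dd_a t)) + F2 (dgm_m1 A x) (dd_a t *~ zsign (dd_ha t)).
    by rewrite (FR2 _ ha) !subrK.
  rewrite E' !(afD (ph2 _)) (afMz (F2Br _)) phMzr (lin _ _ _ _ _ _ (sgI1 hs h)).
  congr (_ + _); rewrite -sumrB; apply: sum_in => u Hu; have [ha' hc' hg' hs'] := ddP Hu.
  rewrite !mulrzAl !mulrzAr !phMzl phisg -/(sg u (h + dd_ha t - 1)) -!mulrzA.
  have E'' : F2 (dgm_act A x (dd_a t)) (dd_a u) =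
     F2 x (dd_a t * dd_a u) - dgm_act A' (F2 x (dd_a t)) (dd_a u) *~ zsign (dd_ha u).
    by rewrite -(afMz (actBr (F2 x (dd_a t)))) (FR3 x (dd_a t) ha') addrC subrK.
  have I := sgI2 hs' (h + dd_ha t - 1); rewrite subrK in I.
  rewrite E'' ph2 phMzr lin2 1?mulrC //.
  by rewrite mulrAC -mulrDl (mulrC (sg u (h + dd_ha t))) I mul0r.
- pose psi := fun (a : B) (c : B') => phi (gpar (@Cgr B') h c) (F2 x (gpar (@Cgr B) 1 a)).
  have P1 : forall a b c, psi (a - b) c = psi a c - psi b c.
    by move=> a b c; rewrite /psi gparB F2Br ph2.
  have P2 : forall a c d, psi a (c - d) = psi a c - psi a d.
    by move=> a c d; rewrite /psi gparB ph1.
  have P3 : forall i a c, psi (actR i a) c = psi a (actR i c).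
    by move=> i a c; rewrite /psi /actR !Cgpar_e F2er -ph3.
  have EP := HDDeq P1 P2 P3.
  rewrite !big_cat !big_map !big_allpairs_dep /= in EP.
  have S1 : \sum_(j <- dd) psi (dga_mu1 B (dd_a j) *~ zsign (dd_hc j)) (dd_c j) =
     \sum_(j <- dd) phi (dd_c j) (F2 x (dga_mu1 B (dd_a j))) *~ sg j h.
    apply: sum_in => t Ht; have [ha hc hg hs] := ddP Ht.
    rewrite /psi (gpar_hom _ _ hc) (gpar_hom _ _ (homMz (Cgr B) _ (Cmuh ha))).
    rewrite !(afMz (F2Br _)) phMzl !phMzr -!mulrzA; congr (_ *~ _).
    rewrite /sg (hcE hs); signs; by case: (oddz h); case: (oddz (dd_ha t)).
  have S2 : \sum_(j <- dd) psi (dd_a j) (dga_mu1 B' (dd_c j)) =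
     - \sum_(j <- dd) phi (dga_mu1 B' (dd_c j)) (F2 x (dd_a j)) *~ (zsign (h + dd_ha j - 1) * sg j h).
    rewrite -sumrN; apply: sum_in => t Ht; have [ha hc hg hs] := ddP Ht.
    rewrite /psi (gpar_hom _ _ ha) (gpar_hom _ _ (Cmuh hc)).
    rewrite !(afMz (F2Br _)) phMzl !phMzr -!mulrzA -mulrNz; congr (_ *~ _).
    rewrite /sg (hcE hs); signs; by case: (oddz h); case: (oddz (dd_ha t)).
  have S3 : \sum_(i1 <- dd) \sum_(i2 <- dd)
           psi (dd_a i1 * dd_a i2 *~ zsign (dd_ha i2 * dd_hc i1)) (dd_c i1 * dd_c i2) =
      \sum_(t <- dd) \sum_(u <- dd)
         phi (dd_c t * dd_c u) (F2 x (dd_a t * dd_a u)) *~ (sg t h * sg u (h + dd_ha t)).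
    apply: sum_in => t Ht; have [ha hc hg hs] := ddP Ht.
    apply: sum_in => u Hu; have [ha' hc' hg' hs'] := ddP Hu.
    rewrite /psi (gpar_hom _ _ (Chom_mul hc hc')).
    rewrite (gpar_hom _ _ (homMz (Cgr B) _ (Chom_mul ha ha'))).
    rewrite !(afMz (F2Br _)) phMzl !phMzr -!mulrzA; congr (_ *~ _).
    rewrite /sg (hcE hs) (hcE hs'); signs.
    by case: (oddz h); case: (oddz (dd_ha t)); case: (oddz (dd_ha u)).
  have SL : \sum_(t <- dd)
     phi (dga_mu1 B' (dd_c t *~ zsign (dd_hc t * (1 + (h + dd_ha t - 1)))))
       (F2 x (dd_a t) *~ zsign (h + dd_ha t - 1)) =
     \sum_(j <- dd) phi (dga_mu1 B' (dd_c j)) (F2 x (dd_a j)) *~ (zsign (h + dd_ha j - 1) * sg j h).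
    apply: sum_in => t Ht.
    by rewrite (afMz (@CmuB B')) phMzl phMzr phisg -mulrzA.
  rewrite S1 S2 S3 in EP; rewrite SL big_split /=.
  move/eqP: EP; rewrite addrCA addrC subr_eq0 => /eqP ->.
  done.
Qed.

Lemma main_prop : typeD_morphism (boxPhi F1 F2 dd) (deltaD dd A) (deltaD dd A').
Proof.
move=> g h x hx; split; first by move=> y hy; exact: part1.
split; first by move=> i; exact: part2.
split; first exact: part3.
exact: (part4 hx).
Qed.
End Main.

Theorem proposition6p50 (k : nat) (Gi : zmodType)
    (B B' : dgAlgebra k Gi) (A A' : dgModule B)
    (dd : seq (ddterm B B')) (F1 : A -> A') (F2 : A -> B -> A') :
  is_DD dd ->
  is_Ainf_morphism F1 F2 ->
  typeD_morphism (boxPhi F1 F2 dd) (deltaD dd A) (deltaD dd A').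
Proof.
move=> H1 H2; exact: (main_prop H1 H2).
Qed.
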